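(* For all positive integers $t$ and $p$ there exists an antipodal $3^t5^p$-splitting of $Q_2^{2^{2t+3p}}$.
   Context: $Q_2^n=\{0,1\}^n$. For $0\le m\le n$, an $m$-face of $Q_2^n$ is given by a tuple $a=(a_1,\dots,a_n)\in\{0,1,*\}^n$ with exactly $m$ entries equal to $*$; it denotes the set $\{x\in Q_2^n : x_i=a_i \text{ whenever } a_i\in\{0,1\}\}$. The direction of a face is the set of positions of its asterisks; two faces are parallel if they have the same direction, and two parallel faces $a,b$ are antipodal if $b_i=1-a_i$ at every non-asterisk position $i$. For positive integers $k<n$, an antipodal $k$-splitting of $Q_2^n$ is a collection of exactly $2^k$ $(n-k)$-faces whose union is $Q_2^n$ and which contains no pair of parallel non-antipodal faces. *)

(* Defs.v *)
From mathcomp Require Import all_boot.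
Set Implicit Arguments. Unset Strict Implicit. Unset Printing Implicit Defensive.

(* A vertex of Q_2^n is a function 'I_n -> bool.
   A face is a word in {0,1,*}^n, encoded as 'I_n -> option bool
   with None standing for the asterisk *, Some b for the digit b. *)
Definition vertex (n : nat) := {ffun 'I_n -> bool}.
Definition face (n : nat) := {ffun 'I_n -> option bool}.

Definition direction n (a : face n) : {set 'I_n} := [set i | a i == None].

Definition is_mface n (m : nat) (a : face n) : bool := #|direction a| == m.

Definition face_set n (a : face n) : {set vertex n} :=
  [set x : vertex n | [forall i, if a i is Some b then x i == b else true]].

Definition parallel n (a b : face n) : bool := direction a == direction b.

Definition antipodal n (a b : face n) : bool :=
  parallel a b &&
  [forall i, if a i is Some x then b i == Some (~~ x) else true].

Definition antipodal_splitting (n k : nat) (S : {set face n}) : Prop :=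
  [/\ 0 < k < n,
      #|S| = 2 ^ k,
      (forall a, a \in S -> is_mface (n - k) a),
      (\bigcup_(a in S) face_set a) = [set: vertex n] &
      (forall a b, a \in S -> b \in S -> a != b -> parallel a b -> antipodal a b)].
Arguments antipodal_splitting : clear implicits.

(* Main.v *)
Require Import Defs.
From mathcomp Require Import all_boot.
From mathcomp Require Import zify.
Set Implicit Arguments. Unset Strict Implicit. Unset Printing Implicit Defensive.

Lemma in_face_set n (a : face n) x :
  (x \in face_set a) = [forall i, if a i is Some b then x i == b else true].
Proof. by rewrite inE. Qed.

Lemma card_pred_ord n (P : pred 'I_n) (Q : pred nat) :
  (forall i : 'I_n, P i = Q i) -> #|P| = count Q (iota 0 n).
Proof.
move=> PQ; rewrite -val_enum_ord count_map cardE /enum_mem size_filter.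
rewrite /enum_mem filter_predT; apply: eq_count => i /=; by rewrite -PQ.
Qed.

Lemma card_face_set n (a : face n) : #|face_set a| = 2 ^ #|direction a|.
Proof.
pose F := fun i : 'I_n => if a i is Some b then pred1 b else predT.
have -> : #|face_set a| = #|(family F : simpl_pred _)|.
  apply: eq_card => x; rewrite in_face_set; apply/forallP/familyP => H i;
    move: (H i); rewrite /F; case: (a i) => //.
rewrite card_family foldrE big_map big_enum /=.
rewrite (eq_bigr (fun i => if a i == None then 2 else 1)); last first.
  by move=> i _; rewrite /F; case: (a i) => [b|]; rewrite ?card1 ?card_bool.
rewrite -big_mkcond /= prod_nat_const; congr (_ ^ _).
by rewrite /direction cardsE.
Qed.

Lemma vol n (S : {set face n}) :
  \sum_(a in S) #|face_set a| = \sum_x #|[set a in S | x \in face_set a]|.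
Proof.
transitivity (\sum_(a in S) \sum_(x : vertex n) (x \in face_set a : nat)).
  apply: eq_bigr => a _; rewrite -sum1_card big_mkcond /=.
  by apply: eq_bigr => x _; case: (x \in face_set a).
rewrite exchange_big /=; apply: eq_bigr => x _.
rewrite -sum1dep_card big_mkcond /= [RHS]big_mkcond /=.
by apply: eq_bigr => a _; case: (a \in S); case: (x \in face_set a).
Qed.

Lemma card_vertex n : #|{: vertex n}| = 2 ^ n.
Proof. by rewrite card_ffun card_bool card_ord. Qed.

Lemma split_uniq n k S : antipodal_splitting n k S ->
  forall a b x, a \in S -> b \in S -> x \in face_set a -> x \in face_set b -> a = b.
Proof.
case=> /andP[k0 kn] cS mS cov _.
have ge1 x : 0 < #|[set a in S | x \in face_set a]|.
  have : x \in \bigcup_(a in S) face_set a by rewrite cov inE.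
  case/bigcupP=> a aS xa; apply/card_gt0P; exists a; by rewrite inE aS xa.
have tot : \sum_x #|[set a in S | x \in face_set a]| = \sum_(x : vertex n) 1.
  rewrite -vol sum1_card card_vertex.
  rewrite (eq_bigr (fun _ => 2 ^ (n - k))); last first.
    by move=> a aS; rewrite card_face_set (eqP (mS a aS)).
  by rewrite sum_nat_const cS -expnD subnKC // ltnW.
have : \sum_x (#|[set a in S | x \in face_set a]| - 1) == 0.
  apply/eqP; apply/eqP; rewrite -(eqn_add2r (\sum_(x : vertex n) 1)) add0n.
  rewrite -big_split /= -tot; apply/eqP; apply: eq_bigr => x _.
  by rewrite subnK.
rewrite sum_nat_eq0 => /forallP H a b x aS bS xa xb.
have := H x; rewrite subn_eq0 => /card_le1_eqP E.
by apply: E; rewrite inE ?aS ?bS ?xa ?xb.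
Qed.

Lemma count_part n K (S : {set face n}) : K <= n ->
  (forall a, a \in S -> #|direction a| = n - K) ->
  (forall x, exists2 a, a \in S & x \in face_set a) ->
  (forall a b x, a \in S -> b \in S -> x \in face_set a -> x \in face_set b -> a = b) ->
  #|S| = 2 ^ K.
Proof.
move=> Kn dS cov uq.
have V := vol S.
have L : \sum_(a in S) #|face_set a| = #|S| * 2 ^ (n - K).
  rewrite (eq_bigr (fun _ => 2 ^ (n - K))) ?sum_nat_const //.
  by move=> a aS; rewrite card_face_set dS.
have R : \sum_x #|[set a in S | x \in face_set a]| = 2 ^ n.
  rewrite (eq_bigr (fun _ => 1)) ?sum1_card ?card_vertex //.
  move=> x _; case: (cov x) => a aS xa; apply/eqP; rewrite eqn_leq; apply/andP; split.
    by apply/card_le1_eqP => b c /setIdP[? ?] /setIdP[? ?]; apply: (uq _ _ x).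
  by apply/card_gt0P; exists a; rewrite inE aS xa.
move: V; rewrite L R; have -> : 2 ^ n = 2 ^ K * 2 ^ (n - K) by rewrite -expnD subnKC.
move=> /eqP.
by rewrite eqn_pmul2r ?expn_gt0 // => /eqP.
Qed.

Lemma memfP n (a : face n) (x : vertex n) :
  reflect (forall i b, a i = Some b -> x i = b) (x \in face_set a).
Proof.
rewrite in_face_set; apply: (iffP forallP) => H i.
  by move=> b E; move: (H i); rewrite E => /eqP.
by case E: (a i) => [b|] //; rewrite (H i b E).
Qed.

Lemma antiP n (a b : face n) : antipodal a b -> forall i x, a i = Some x -> b i = Some (~~ x).
Proof. by case/andP=> _ /forallP H i x E; move: (H i); rewrite E => /eqP. Qed.

Lemma parP n (a b : face n) : parallel a b -> forall i, (a i == None) = (b i == None).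
Proof. by move=> /eqP /setP H i; move: (H i); rewrite !inE. Qed.

Lemma parI n (a b : face n) : (forall i, (a i == None) = (b i == None)) -> parallel a b.
Proof. by move=> H; apply/eqP/setP => i; rewrite !inE H. Qed.

Lemma card_set_sum (T : finType) (P : pred T) : #|[set i | P i]| = \sum_i (P i : nat).
Proof. by rewrite -sum1dep_card big_mkcond; apply: eq_bigr => i _; case: (P i). Qed.

Section Comp.
Variables n1 n2 k1 k2 : nat.
Variables (S1 : {set face n1}) (S2 : {set face n2}).
Hypothesis H1 : antipodal_splitting n1 k1 S1.
Hypothesis H2 : antipodal_splitting n2 k2 S2.

Lemma cardP : #|{: 'I_n1 * 'I_n2}| = n1 * n2.
Proof. by rewrite card_prod !card_ord. Qed.
Definition prj (k : 'I_(n1 * n2)) : 'I_n1 * 'I_n2 := enum_val (cast_ord (esym cardP) k).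
Definition unprj (p : 'I_n1 * 'I_n2) : 'I_(n1 * n2) := cast_ord cardP (enum_rank p).
Lemma prjK : cancel prj unprj.
Proof. by move=> k; rewrite /prj /unprj enum_valK cast_ordKV. Qed.
Lemma unprjK : cancel unprj prj.
Proof. by move=> p; rewrite /prj /unprj cast_ordK enum_rankK. Qed.

Definition dflt2 : face n2 := [ffun _ => None].
Definition dflt1 : face n1 := [ffun _ => None].
Definition T (r : vertex n2) : face n2 := odflt dflt2 [pick F in S2 | r \in face_set F].
Definition A (y : vertex n1) : face n1 := odflt dflt1 [pick a in S1 | y \in face_set a].

Lemma cover_ex n k S (H : antipodal_splitting n k S) x : exists2 a, a \in S & x \in face_set a.
Proof.
case: H => _ _ _ cov _.
have : x \in \bigcup_(a in S) face_set a by rewrite cov inE.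
by case/bigcupP=> a aS xa; exists a.
Qed.

Lemma T_spec r : T r \in S2 /\ r \in face_set (T r).
Proof.
rewrite /T; case: pickP => [F /andP[] //|/= H].
by case: (cover_ex H2 r) => F FS rF; move: (H F); rewrite FS rF.
Qed.
Lemma A_spec y : A y \in S1 /\ y \in face_set (A y).
Proof.
rewrite /A; case: pickP => [F /andP[] //|/= H].
by case: (cover_ex H1 y) => F FS rF; move: (H F); rewrite FS rF.
Qed.
Lemma T_uniq F r : F \in S2 -> r \in face_set F -> T r = F.
Proof. by move=> FS rF; case: (T_spec r) => a b; apply: (split_uniq H2) b rF. Qed.
Lemma A_uniq F r : F \in S1 -> r \in face_set F -> A r = F.
Proof. by move=> FS rF; case: (A_spec r) => a b; apply: (split_uniq H1) b rF. Qed.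

Definition bb (F : face n2) : bool :=
  if [pick j | F j != None] is Some j then F j == Some true else false.

Lemma fixed_ex F : F \in S2 -> exists j, F j != None.
Proof.
case: H2 => /andP[k0 kn] _ mS _ _ FS.
apply/existsP; apply: contraT; rewrite negb_exists => /forallP H.
have : direction F = [set: 'I_n2].
  by apply/setP => j; rewrite !inE; move: (H j); rewrite negbK.
move=> E; move: (mS F FS); rewrite /is_mface E cardsT card_ord.
move/eqP => E2; lia.
Qed.

Lemma bb_anti F G : F \in S2 -> antipodal F G -> bb G = ~~ bb F.
Proof.
move=> FS aFG; have pFG := parP (andP aFG).1.
rewrite /bb (@eq_pick _ (fun j => G j != None) (fun j => F j != None)); last first.
  by move=> j /=; rewrite pFG.
case: pickP => [j Fj|H]; last by case: (fixed_ex FS) => j; rewrite H.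
case E: (F j) Fj => [v|] // _.
by rewrite (antiP aFG E); case: (v).
Qed.

Definition rowv (x : vertex (n1 * n2)) i : vertex n2 := [ffun j => x (unprj (i, j))].
Definition yv x : vertex n1 := [ffun i => bb (T (rowv x i))].
Definition comp (a : face n1) (F : 'I_n1 -> face n2) : face (n1 * n2) :=
  [ffun k => if a (prj k).1 is Some _ then F (prj k).1 (prj k).2 else None].
Definition Phi x := comp (A (yv x)) (fun i => T (rowv x i)).

Lemma k_unprj (k : 'I_(n1 * n2)) : exists p, k = unprj p.
Proof. by exists (prj k); rewrite prjK. Qed.

Lemma Phi_in x : x \in face_set (Phi x).
Proof.
apply/memfP => k b; have [[i j] ->] := k_unprj k.
rewrite ffunE unprjK /=; case: (A (yv x) i) => // _ E.
have /memfP H := (T_spec (rowv x i)).2.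
by move: (H j b E); rewrite ffunE.
Qed.

Lemma Phi_stable x x' : x' \in face_set (Phi x) -> Phi x' = Phi x.
Proof.
move=> /memfP Hx'.
set a := A (yv x).
have [aS ya] := A_spec (yv x).
have C1 i v : a i = Some v -> T (rowv x' i) = T (rowv x i).
  move=> E; apply: T_uniq; first exact: (T_spec _).1.
  apply/memfP => j b Eb; rewrite ffunE; apply: Hx'.
  by rewrite ffunE unprjK /= -/a E.
have C2 : yv x' \in face_set a.
  apply/memfP => i v E; rewrite ffunE (C1 i v E).
  by move/memfP: ya => /(_ i v E); rewrite ffunE.
rewrite /Phi (A_uniq aS C2) -/a; apply/ffunP => k; rewrite !ffunE.
by case E: (a (prj k).1) => [v|] //; rewrite (C1 _ _ E).
Qed.


Lemma dir_Phi x : #|direction (Phi x)| = n1 * n2 - k1 * k2.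
Proof.
case: (H1) => /andP[k10 k1n] _ mS1 _ _.
case: (H2) => /andP[k20 k2n] _ mS2 _ _.
set a := A (yv x); have [aS _] := A_spec (yv x).
rewrite /direction card_set_sum.
rewrite (reindex unprj); last by exists prj => p _; [apply: unprjK | apply: prjK].
have -> : \sum_(p : 'I_n1 * 'I_n2) (Phi x (unprj p) == None : nat) =
   \sum_i \sum_j (Phi x (unprj (i, j)) == None : nat).
  by rewrite pair_bigA; apply: eq_bigr => -[].
rewrite (eq_bigr (fun i => (n2 - k2) + (a i == None) * k2)); last first.
  move=> i _; rewrite (eq_bigr (fun j => ((if a i is Some _ then T (rowv x i) j == None else true) : nat))); last first.
    by move=> j _; rewrite ffunE unprjK /= -/a; case: (a i).
  case: (a i) => [v|] /=.
    rewrite -(card_set_sum (fun j => T (rowv x i) j == None)) -/(direction _) (eqP (mS2 _ (T_spec _).1)) mul0n addn0 //.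
  rewrite mul1n subnK; last exact: ltnW.
  by rewrite sum1_card card_ord.
rewrite big_split /= sum_nat_const card_ord -big_distrl /= -card_set_sum -/(direction a).
rewrite (eqP (mS1 a aS)).
have -> : n1 * n2 = n1 * (n2 - k2) + n1 * k2 by rewrite -mulnDr subnK // ltnW.
rewrite mulnBl -addnBA; last by rewrite leq_mul2r ltnW ?orbT.
by [].
Qed.


Lemma Phi_anti x x' : Phi x != Phi x' -> parallel (Phi x) (Phi x') ->
  antipodal (Phi x) (Phi x').
Proof.
move=> neq par.
have pc := parP par.
case: (H1) => _ _ _ _ an1.
case: (H2) => _ _ _ _ an2.
set a := A (yv x); set a' := A (yv x').
have [aS ya] := A_spec (yv x); have [aS' ya'] := A_spec (yv x').
have Cn i : (a i == None) = (a' i == None).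
  case Ea: (a i) => [v|]; case Ea': (a' i) => [v'|] //.
    have [j Hj] := fixed_ex (T_spec (rowv x i)).1.
    by move: (pc (unprj (i, j))); rewrite !ffunE unprjK /= -/a -/a' Ea Ea' (negbTE Hj).
  have [j Hj] := fixed_ex (T_spec (rowv x' i)).1.
  by move: (pc (unprj (i, j))); rewrite !ffunE unprjK /= -/a -/a' Ea Ea' (negbTE Hj).
have parF i v : a i = Some v -> parallel (T (rowv x i)) (T (rowv x' i)).
  move=> E; apply: parI => j; move: (pc (unprj (i, j))); rewrite !ffunE unprjK /= -/a -/a' E.
  by case Ea': (a' i) => [v'|] //; move: (Cn i); rewrite E Ea'.
have bbx i v : a i = Some v -> bb (T (rowv x i)) = v.
  by move=> E; move/memfP: ya => /(_ i v E); rewrite ffunE.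
have bbx' i v : a' i = Some v -> bb (T (rowv x' i)) = v.
  by move=> E; move/memfP: ya' => /(_ i v E); rewrite ffunE.
have pa : parallel a a' by apply: parI.
case: (eqVneq a a') => [Eaa | naa].
  case/negP: neq; apply/eqP/ffunP => k; rewrite !ffunE -/a -/a' -Eaa.
  case E: (a (prj k).1) => [v|] //.
  case: (eqVneq (T (rowv x (prj k).1)) (T (rowv x' (prj k).1))) => [-> //|nF].
  have := an2 _ _ (T_spec _).1 (T_spec _).1 nF (parF _ _ E).
  move/(bb_anti (T_spec _).1); rewrite (bbx _ _ E) (bbx' (prj k).1 v); last by rewrite -Eaa.
  by case: (v).
have aa := an1 _ _ aS aS' naa pa.
apply/andP; split => //; apply/forallP => k; rewrite !ffunE -/a -/a'.
case E: (a (prj k).1) => [v|] //.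
rewrite (antiP aa E).
have nF : T (rowv x (prj k).1) != T (rowv x' (prj k).1).
  apply/negP => /eqP eF.
  by move: (bbx' _ _ (antiP aa E)); rewrite -eF (bbx _ _ E); case: (v).
have aF := an2 _ _ (T_spec _).1 (T_spec _).1 nF (parF _ _ E).
by case EF: (T (rowv x (prj k).1) (prj k).2) => [w|] //; rewrite (antiP aF EF).
Qed.

Definition Sc := [set Phi x | x : vertex (n1 * n2)].

Lemma compose_split : antipodal_splitting (n1 * n2) (k1 * k2) Sc.
Proof.
case: (H1) => /andP[k10 k1n] _ _ _ _.
case: (H2) => /andP[k20 k2n] _ _ _ _.
have uq : forall a b x, a \in Sc -> b \in Sc -> x \in face_set a -> x \in face_set b -> a = b.
  move=> a b x /imsetP[u _ ->] /imsetP[v _ ->] xu xv.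
  by rewrite -(Phi_stable xu) -(Phi_stable xv).
have cov x : exists2 a, a \in Sc & x \in face_set a.
  by exists (Phi x); [apply/imsetP; exists x | apply: Phi_in].
have Kn : k1 * k2 <= n1 * n2 by rewrite leq_mul // ltnW.
split.
- by rewrite muln_gt0 k10 k20 /= ltn_mul.
- apply: count_part => // a /imsetP[u _ ->]; exact: dir_Phi.
- by move=> a /imsetP[u _ ->]; rewrite /is_mface dir_Phi.
- apply/setP => x; rewrite inE; case: (cov x) => a aS xa.
  by apply/bigcupP; exists a.
- move=> a b /imsetP[u _ ->] /imsetP[v _ ->]; exact: Phi_anti.
Qed.

End Comp.

Definition ex_split n k := exists S : {set face n}, antipodal_splitting n k S.

Lemma ex_compose n1 n2 k1 k2 : ex_split n1 k1 -> ex_split n2 k2 -> ex_split (n1 * n2) (k1 * k2).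
Proof. by move=> [S1 H1] [S2 H2]; exists (Sc S1 S2); apply: compose_split. Qed.

Definition mkf n (s : seq (option bool)) : face n := [ffun i : 'I_n => nth None s i].
Fixpoint bitseqs n : seq (seq bool) :=
  if n is m.+1 then [seq b :: w | b <- [:: false; true], w <- bitseqs m] else [:: [::]].
Definition matchv n (s : seq (option bool)) (v : seq bool) :=
  all (fun i => if nth None s i is Some c then nth false v i == c else true) (iota 0 n).
Definition parl n (s s' : seq (option bool)) :=
  all (fun i => (nth None s i == None) == (nth None s' i == None)) (iota 0 n).
Definition antil n (s s' : seq (option bool)) :=
  all (fun i => if nth None s i is Some c then nth None s' i == Some (~~ c) else true) (iota 0 n).
Definition chk n k (Ls : seq (seq (option bool))) :=
  [&& 0 < k < n, all (fun s => size s == n) Ls, uniq Ls, size Ls == 2 ^ k,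
   all (fun s => count (fun i => nth None s i == None) (iota 0 n) == n - k) Ls,
   all (fun v => has (fun s => matchv n s v) Ls) (bitseqs n) &
   all (fun s => all (fun s' => (s == s') || ~~ parl n s s' || antil n s s') Ls) Ls].

Lemma mem_bitseqs n (v : seq bool) : size v = n -> v \in bitseqs n.
Proof.
elim: n v => [|n IH] [|b w] //= [] Hw.
have Hw' := IH w Hw; rewrite cats0 mem_cat; apply/orP; case: b; [right|left]; apply/mapP; by exists w.
Qed.

Lemma chk_ok n k Ls : chk n k Ls -> antipodal_splitting n k [set a in map (mkf n) Ls].
Proof.
case/and5P=> kk /allP sz uq /eqP sL /and3P[/allP cnt /allP cov /allP anti].
have inj : {in Ls &, injective (mkf n)}.
  move=> s s' Hs Hs' E; have /eqP s1 := sz _ Hs; have /eqP s2 := sz _ Hs'.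
  apply: (@eq_from_nth _ None); first by rewrite s1 s2.
  move=> i; rewrite s1 => Hi.
  by have := congr1 (fun f : face n => f (Ordinal Hi)) E; rewrite /= !ffunE.
split => //.
- by rewrite cardsE -sL -(size_map (mkf n)); apply/card_uniqP; rewrite map_inj_in_uniq.
- move=> a; rewrite inE => /mapP[s Hs ->]; rewrite /is_mface.
  have -> : #|direction (mkf n s)| = #|[pred i : 'I_n | nth None s i == None]|.
    by apply: eq_card => i; rewrite !inE ffunE.
  by rewrite (@card_pred_ord n _ (fun i => nth None s i == None)) ?(cnt s Hs).
- apply/setP => x; rewrite inE; apply/bigcupP.
  have vb : map x (enum 'I_n) \in bitseqs n by apply: mem_bitseqs; rewrite size_map size_enum_ord.
  case/hasP: (cov _ vb) => s Hs /allP M.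
  exists (mkf n s); first by rewrite inE; apply/mapP; exists s.
  apply/memfP => i b; rewrite ffunE => E.
  have := M i; rewrite mem_iota add0n ltn_ord E => /(_ isT) /eqP.
  by rewrite (nth_map i) ?size_enum_ord ?ltn_ord // nth_ord_enum.
- move=> a b; rewrite !inE => /mapP[s Hs ->] /mapP[s' Hs' ->] neq par.
  have := allP (anti s Hs) s' Hs'; case/orP => [/orP[/eqP E|]|A].
  + by rewrite E eqxx in neq.
  + case/negP; apply/allP => i; rewrite mem_iota add0n => Hi.
    by have := parP par (Ordinal Hi); rewrite !ffunE => ->.
  + apply/andP; split => //; apply/forallP => i; rewrite !ffunE.
    by have := allP A i; rewrite mem_iota add0n ltn_ord => /(_ isT).
Qed.

Definition st := @None bool.
Definition on := Some true.
Definition zr := Some false.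

Definition L4 : seq (seq (option bool)) := [:: [:: zr; zr; st; zr];
  [:: on; st; zr; zr];
  [:: zr; on; zr; st];
  [:: on; zr; on; st];
  [:: st; on; on; zr];
  [:: st; zr; zr; on];
  [:: on; on; st; on];
  [:: zr; st; on; on]].
Definition L8 : seq (seq (option bool)) := [:: [:: st; zr; st; zr; zr; zr; st; zr];
  [:: st; on; st; on; on; on; st; on];
  [:: st; on; zr; zr; zr; zr; st; st];
  [:: st; zr; on; on; on; on; st; st];
  [:: st; on; on; st; st; zr; zr; zr];
  [:: st; zr; zr; st; st; on; on; on];
  [:: zr; on; st; on; st; on; st; zr];
  [:: on; zr; st; zr; st; zr; st; on];
  [:: on; on; on; st; st; on; st; zr];
  [:: zr; zr; zr; st; st; zr; st; on];
  [:: st; zr; zr; st; on; on; zr; st];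
  [:: st; on; on; st; zr; zr; on; st];
  [:: on; on; zr; st; on; st; st; zr];
  [:: zr; zr; on; st; zr; st; st; on];
  [:: st; st; on; st; on; zr; on; zr];
  [:: st; st; zr; st; zr; on; zr; on];
  [:: st; zr; st; st; on; zr; zr; zr];
  [:: st; on; st; st; zr; on; on; on];
  [:: st; zr; zr; st; on; st; on; zr];
  [:: st; on; on; st; zr; st; zr; on];
  [:: zr; on; zr; on; st; zr; st; st];
  [:: on; zr; on; zr; st; on; st; st];
  [:: on; zr; on; on; zr; st; st; st];
  [:: zr; on; zr; zr; on; st; st; st];
  [:: zr; zr; st; on; zr; st; st; zr];
  [:: on; on; st; zr; on; st; st; on];
  [:: on; st; zr; on; zr; zr; st; st];
  [:: zr; st; on; zr; on; on; st; st];
  [:: zr; st; st; zr; zr; on; st; zr];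
  [:: on; st; st; on; on; zr; st; on];
  [:: on; st; zr; st; zr; on; st; zr];
  [:: zr; st; on; st; on; zr; st; on]].

Lemma chk4 : chk 4 3 L4. Proof. by vm_compute. Qed.
Lemma chk8 : chk 8 5 L8. Proof. by vm_compute. Qed.

Lemma ex43 : ex_split 4 3. Proof. by eexists; apply: chk_ok chk4. Qed.
Lemma ex85 : ex_split 8 5. Proof. by eexists; apply: chk_ok chk8. Qed.

Lemma ex3 t : 0 < t -> ex_split (2 ^ (2 * t)) (3 ^ t).
Proof.
elim: t => [//|[|t] IH _]; first exact: ex43.
have -> : 2 ^ (2 * t.+2) = 4 * 2 ^ (2 * t.+1) by rewrite (mulnS 2 t.+1) expnD.
by rewrite (expnS 3 t.+1); apply: ex_compose ex43 (IH isT).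
Qed.

Lemma ex5 p : 0 < p -> ex_split (2 ^ (3 * p)) (5 ^ p).
Proof.
elim: p => [//|[|p] IH _]; first exact: ex85.
have -> : 2 ^ (3 * p.+2) = 8 * 2 ^ (3 * p.+1) by rewrite (mulnS 3 p.+1) expnD.
by rewrite (expnS 5 p.+1); apply: ex_compose ex85 (IH isT).
Qed.

Theorem corollary1 (t p : nat) : 0 < t -> 0 < p ->
  exists S : {set face (2 ^ (2 * t + 3 * p))},
    antipodal_splitting (2 ^ (2 * t + 3 * p)) (3 ^ t * 5 ^ p) S.
Proof.
move=> t0 p0; have := ex_compose (ex3 t0) (ex5 p0).
by rewrite -expnD.
Qed.
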